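(* Let $H=\sum_{i=1}^m H_i$ be an instance of the $k$-local Hamiltonian problem on $n$ qubits and let $a\ge 0$. If there exists a state $|\Gamma\rangle$ such that $\langle\Gamma|H|\Gamma\rangle\le am$, then there exists a strategy for the $r$ entangled provers in Protocol $P$ that is accepted with probability at least $1-a/2$.
   Context: An instance of the $k$-local Hamiltonian problem on $n$ qubits is $H=\sum_{i=1}^m H_i$ on $(\mathbb{C}^2)^{\otimes n}$, each $H_i$ positive semidefinite of operator norm at most $1$ acting on a set $S_i\subseteq[n]$ of at most $k$ qubits (tensored with identity elsewhere). Let $\mathcal{C}$ be a quantum error-correcting code encoding $1$ logical qubit into $r$ physical qubits, which corrects all single-qubit Pauli errors and such that every codeword has maximally mixed reduced density matrix $I/2$ on any single qubit (e.g. the $5$-qubit code, $r=5$). Protocol $P$ (one round, $r$ provers who may share entanglement but not communicate): the verifier performs each of the following two tests with probability $1/2$. Test 1: pick $j\in[m]$ uniformly; ask every prover for its share of all qubits in $S_j$; decode each group of $r$ shares (one per prover) of each qubit of $S_j$ with the decoding map of $\mathcal{C}$, measure the resulting $k$-qubit state with $\{H_j, I-H_j\}$, and reject if the outcome is $H_j$. Test 2: pick $i\in[n]$ uniformly and a set $S\subseteq[n]$ of size $k$ uniformly among those containing $i$; with probability $1/2$ ask one uniformly random prover for its shares of all qubits in $S$ and the other $r-1$ provers for their share of qubit $i$ only; with probability $1/2$ ask all provers for their share of qubit $i$; in both cases reject unless the $r$ received shares of qubit $i$ lie in the codespace of $\mathcal{C}$ (projective measurement onto the codespace). *)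

(* Defs.v *)
From HB Require Import structures.
From mathcomp Require Import all_boot all_order all_algebra.
Set Implicit Arguments. Unset Strict Implicit. Unset Printing Implicit Defensive.
Import Order.TTheory GRing.Theory Num.Theory.
Local Open Scope ring_scope.

Notation qstr N := {ffun 'I_N -> bool}.

Section QDefs.
Variable C : numClosedFieldType.

(* vectors and operators on the Hilbert space with orthonormal basis T;
   A x y = <x|A|y>. *)
Definition vect (T : finType) := T -> C.
Definition oper (T : finType) := T -> T -> C.

Definition dotp (T : finType) (u v : vect T) : C := \sum_x (u x)^* * v x.
Definition expect (T : finType) (v : vect T) (A : oper T) : C :=
  \sum_x \sum_y (v x)^* * A x y * v y.
Definition applyop (T : finType) (A : oper T) (v : vect T) : vect T :=
  fun x => \sum_y A x y * v y.
Definition opmul (T : finType) (A B : oper T) : oper T :=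
  fun x z => \sum_y A x y * B y z.
Definition adj (T : finType) (A : oper T) : oper T := fun x y => (A y x)^*.
Definition idop (T : finType) : oper T := fun x y => (x == y)%:R.

Definition unit_vec (T : finType) (v : vect T) := dotp v v = 1.
Definition psd (T : finType) (A : oper T) := forall v : vect T, 0 <= expect v A.
Definition normle1 (T : finType) (A : oper T) :=
  forall v : vect T, dotp (applyop A v) (applyop A v) <= dotp v v.
Definition unitary (T : finType) (U : oper T) :=
  opmul (adj U) U = @idop T /\ opmul U (adj U) = @idop T.

Definition restr (n : nat) (S : {set 'I_n}) (x : qstr n) : qstr n :=
  [ffun i => (i \in S) && x i].

(* A acts on the qubits of S (tensored with identity elsewhere) *)
Definition acts_on (n : nat) (S : {set 'I_n}) (A : oper (qstr n)) :=
  exists h : oper (qstr n), forall x y,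
    A x y = h (restr S x) (restr S y) * (restr (~: S) x == restr (~: S) y)%:R.

Definition klocal_instance (n k m : nat) (Hs : 'I_m -> oper (qstr n))
    (S : 'I_m -> {set 'I_n}) :=
  forall j, [/\ #|S j| <= k, acts_on (S j) (Hs j), psd (Hs j) & normle1 (Hs j)]%N.

Definition hamiltonian (n m : nat) (Hs : 'I_m -> oper (qstr n)) : oper (qstr n) :=
  fun x y => \sum_j Hs j x y.

(* ---------- the code C : 1 logical qubit into r physical qubits ----------
   Enc : encoding isometry, Enc s b = <s|Enc|b>. *)
Definition enc_isometry (r : nat) (Enc : qstr r -> bool -> C) :=
  forall b b', \sum_s (Enc s b)^* * Enc s b' = (b == b')%:R.

Definition codeproj (r : nat) (Enc : qstr r -> bool -> C) : oper (qstr r) :=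
  fun s t => \sum_b Enc s b * (Enc t b)^*.

Definition pauliI : oper bool := fun b b' => (b == b')%:R.
Definition pauliX : oper bool := fun b b' => (b != b')%:R.
Definition pauliY : oper bool :=
  fun b b' => if b == b' then 0 else (if b then 'i else - 'i).
Definition pauliZ : oper bool :=
  fun b b' => (b == b')%:R * (if b then -1 else 1).
Definition is_pauli (P : oper bool) :=
  P = pauliI \/ P = pauliX \/ P = pauliY \/ P = pauliZ.

Definition agree_off (r : nat) (q : 'I_r) (s t : qstr r) :=
  [forall j, (j != q) ==> (s j == t j)].

Definition single_qubit_op (r : nat) (q : 'I_r) (P : oper bool) : oper (qstr r) :=
  fun s t => P (s q) (t q) * (agree_off q s t)%:R.

(* Decoding map D (a quantum channel from r qubits to 1 qubit), given in the
   Heisenberg picture by the images G b b' := D^*( |b><b'| ) of matrix units,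
   so that D^*(A) = \sum_{b,b'} A b b' * G b b'. *)
Definition dual_channel (r : nat) (G : bool -> bool -> oper (qstr r)) :=
  (* complete positivity of D (Choi matrix of D^* is psd) *)
  psd (fun bs bt : bool * qstr r => G bs.1 bt.1 bs.2 bt.2) /\
  (* trace preservation of D (D^* unital) *)
  (forall s t, \sum_b G b b s t = (s == t)%:R).

(* D corrects every single-qubit Pauli error E on the code:
   D(E Enc rho Enc^* E^* ) = rho for all rho, i.e. Enc^* E^* D^*(A) E Enc = A. *)
Definition corrects_single_paulis (r : nat) (Enc : qstr r -> bool -> C)
    (G : bool -> bool -> oper (qstr r)) :=
  forall (q : 'I_r) (P : oper bool), is_pauli P ->
  let EEnc := fun (s : qstr r) (c : bool) => \sum_(u : qstr r) single_qubit_op q P s u * Enc u c in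
  forall b b' c c',
    \sum_(s : qstr r) \sum_(t : qstr r) (EEnc s c)^* * G b b' s t * EEnc t c' = ((b == c) && (b' == c'))%:R.

Definition reduced1 (r : nat) (q : 'I_r) (v : vect (qstr r)) : oper bool :=
  fun b b' => \sum_(s : qstr r) \sum_(t : qstr r)
    ((s q == b) && (t q == b') && agree_off q s t)%:R * v s * (v t)^*.

Definition codewords_locally_mixed (r : nat) (Enc : qstr r -> bool -> C) :=
  forall v : vect (qstr r), unit_vec v -> applyop (codeproj Enc) v = v ->
  forall q : 'I_r, reduced1 q v = fun b b' => (b == b')%:R / 2%:R.

(* ---------- the protocol P with r provers ----------
   Label register: position (p,i) holds prover p's share of qubit i. *)
Notation lab n r := {ffun 'I_r * 'I_n -> bool}.
Definition joint (n r : nat) (W : finType) := (lab n r * {ffun 'I_r -> W})%type.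

Definition rowp (n r : nat) (x : lab n r) (p : 'I_r) : qstr n := [ffun i => x (p, i)].
Definition grp (n r : nat) (x : lab n r) (i : 'I_n) : qstr r := [ffun p => x (p, i)].

(* A general strategy: each prover p holds the n share-qubits (p,i) plus a
   private workspace W; the provers share an arbitrary entangled state psi.
   On question Q (a set of qubit indices) prover p applies a unitary
   sU p Q to its own registers and sends its share-qubits (p,i), i in Q. *)
Record strategy (n r : nat) := Strategy {
  sW : finType;
  spsi : vect (joint n r sW);
  sU : 'I_r -> {set 'I_n} -> oper (qstr n * sW)%type }.
Arguments sW {n r} s.
Arguments spsi {n r} s _.
Arguments sU {n r} s _ _ _ _.

Definition valid_strategy (n r : nat) (st : strategy n r) :=
  unit_vec (spsi st) /\ forall p Q, unitary (sU st p Q).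

Definition tensU (n r : nat) (W : finType) (U : 'I_r -> oper (qstr n * W)%type) :
  oper (joint n r W) :=
  fun x y => \prod_p U p (rowp x.1 p, x.2 p) (rowp y.1 p, y.2 p).

Definition post_state (n r : nat) (st : strategy n r) (Q : 'I_r -> {set 'I_n}) :
  vect (joint n r (sW st)) :=
  applyop (tensU (fun p => sU st p (Q p))) (spsi st).

Arguments post_state {n r} st Q _.

Definition agree_off_groups (n r : nat) (W : finType) (A : {set 'I_n})
    (x y : joint n r W) :=
  [forall p, forall i, (i \notin A) ==> (x.1 (p, i) == y.1 (p, i))] && (x.2 == y.2).

Section Protocol.
Variables (n k m r : nat) (Hs : 'I_m -> oper (qstr n)) (S : 'I_m -> {set 'I_n})
  (Enc : qstr r -> bool -> C) (G : bool -> bool -> oper (qstr r)).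

(* Test 1, term j: rejection POVM element (Heisenberg picture): decode the
   groups of the qubits of S_j with D and measure H_j. *)
Definition rej1 (W : finType) (j : 'I_m) : oper (joint n r W) :=
  fun x y => (agree_off_groups (S j) x y)%:R *
    \sum_(z : qstr n | restr (S j) z == z) \sum_(z' : qstr n | restr (S j) z' == z')
       Hs j z z' * \prod_(i in S j) G (z i) (z' i) (grp x.1 i) (grp y.1 i).

(* Test 2: acceptance projector: the r shares of qubit i lie in the codespace *)
Definition acc2 (W : finType) (i : 'I_n) : oper (joint n r W) :=
  fun x y => (agree_off_groups [set i] x y)%:R * codeproj Enc (grp x.1 i) (grp y.1 i).

Definition ksets (i : 'I_n) : {set {set 'I_n}} :=
  [set T : {set 'I_n} | (i \in T) && (#|T| == k)%N].

Definition accept_prob (st : strategy n r) : C :=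
  2^-1 * ((\sum_j (1 - expect (post_state st (fun _ => S j)) (rej1 (W := sW st) j))) / m%:R)
  + 2^-1 * ((\sum_i
      ((\sum_(T in ksets i)
          (2^-1 * ((\sum_p0 expect
                      (post_state st (fun p => if p == p0 then T else [set i]))
                      (acc2 (W := sW st) i)) / r%:R)
           + 2^-1 * expect (post_state st (fun _ => [set i])) (acc2 (W := sW st) i)))
       / #|ksets i|%:R)) / n%:R).
End Protocol.
End QDefs.
Arguments klocal_instance {C n} k {m} Hs S.
Arguments accept_prob {C n} k {m r} Hs S Enc G st.

(* Main.v *)
Require Import Defs.
From HB Require Import structures.
From mathcomp Require Import all_boot all_order all_algebra.
From mathcomp Require Import ring.
From Stdlib Require Import FunctionalExtensionality.
Set Implicit Arguments. Unset Strict Implicit. Unset Printing Implicit Defensive.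
Import Order.TTheory GRing.Theory Num.Theory.
Local Open Scope ring_scope.

Section Aux.
Variables (C : numClosedFieldType) (n r : nat).
Local Notation labT := {ffun 'I_r * 'I_n -> bool}.

Definition trf (x : labT) : {ffun 'I_n -> qstr r} := [ffun l => grp x l].
Definition untr (f : {ffun 'I_n -> qstr r}) : labT := [ffun pi => f pi.2 pi.1].

Lemma trf_untr f : trf (untr f) = f.
Proof. by apply/ffunP => l; apply/ffunP => p; rewrite /trf /untr /grp !ffunE. Qed.
Lemma untr_trf x : untr (trf x) = x.
Proof. by apply/ffunP => -[p l]; rewrite /trf /untr /grp !ffunE. Qed.

Lemma reindex_lab (G : {ffun 'I_n -> qstr r} -> C) :
  \sum_(x : labT) G (trf x) = \sum_f G f.
Proof.
rewrite (reindex untr) /=; first by apply: eq_bigr => f _; rewrite trf_untr.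
by exists trf => x _; rewrite ?untr_trf ?trf_untr.
Qed.

Lemma sum2_lab (F : 'I_n -> qstr r -> qstr r -> C) :
  \sum_(x : labT) \sum_(y : labT) \prod_l F l (grp x l) (grp y l) =
  \prod_l \sum_s \sum_t F l s t.
Proof.
rewrite bigA_distr_bigA /=.
transitivity (\sum_(f : {ffun 'I_n -> qstr r}) \sum_(y : labT) \prod_l F l (f l) (grp y l)).
  rewrite -(reindex_lab (fun f => \sum_(y : labT) \prod_l F l (f l) (grp y l))).
  by apply: eq_bigr => x _ /=; apply: eq_bigr => y _; apply: eq_bigr => l _; rewrite ffunE.
apply: eq_bigr => f _.
rewrite bigA_distr_bigA /=.
rewrite -(reindex_lab (fun g => \prod_i F i (f i) (g i))).
by apply: eq_bigr => y _; apply: eq_bigr => l _; rewrite ffunE.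
Qed.
End Aux.

Section Aux2.
Variables (C : numClosedFieldType) (n r : nat).
Local Notation labT := {ffun 'I_r * 'I_n -> bool}.
Local Notation J := (joint n r unit).
Definition u0 : {ffun 'I_r -> unit} := [ffun _ => tt].

Lemma sum_joint (F : J -> C) : \sum_x F x = \sum_(x : labT) F (x, u0).
Proof.
transitivity (\sum_(p : J) F (p.1, p.2)); first by apply: eq_bigr => -[].
rewrite -(pair_bigA _ (fun a b => F (a, b))) /=; apply: eq_bigr => x _.
rewrite (big_pred1 u0) // => u /=; apply/esym/eqP/ffunP => p; rewrite ffunE; by case: (u p).
Qed.

Definition psiG (Enc : qstr r -> bool -> C) (Gamma : vect C (qstr n)) : vect C J :=
  fun x => \sum_z Gamma z * \prod_l Enc (grp x.1 l) (z l).

Lemma swap4 (A B D E : finType) (F : A -> B -> D -> E -> C) :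
  \sum_a \sum_b \sum_c \sum_d F a b c d = \sum_c \sum_d \sum_a \sum_b F a b c d.
Proof.
transitivity (\sum_a \sum_c \sum_b \sum_d F a b c d).
  by apply: eq_bigr => a _; rewrite exchange_big.
transitivity (\sum_a \sum_c \sum_d \sum_b F a b c d).
  by apply: eq_bigr => a _; apply: eq_bigr => c _; rewrite exchange_big.
rewrite exchange_big; apply: eq_bigr => c _; by rewrite exchange_big.
Qed.

Lemma expect_prod Enc Gamma (D : 'I_n -> qstr r -> qstr r -> C) :
  expect (psiG Enc Gamma) (fun x y => \prod_l D l (grp x.1 l) (grp y.1 l)) =
  \sum_z \sum_z' (Gamma z)^* * Gamma z' *
     \prod_l \sum_s \sum_t (Enc s (z l))^* * D l s t * Enc t (z' l).
Proof.
rewrite /expect sum_joint; under eq_bigr do rewrite sum_joint.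
rewrite /psiG /=.
under [RHS]eq_bigr do under eq_bigr do rewrite -sum2_lab mulr_sumr.
under [RHS]eq_bigr do under eq_bigr do under eq_bigr do rewrite mulr_sumr.
rewrite swap4; apply: eq_bigr => x _; apply: eq_bigr => y _.
rewrite rmorph_sum mulr_suml mulr_suml; apply: eq_bigr => z _.
rewrite mulr_sumr; apply: eq_bigr => z' _.
rewrite rmorphM rmorph_prod /=.
rewrite !big_split /=.
ring.
Qed.
End Aux2.

Section Aux3.
Variables (C : numClosedFieldType) (n r : nat).
Local Notation labT := {ffun 'I_r * 'I_n -> bool}.
Local Notation J := (joint n r unit).

Lemma forall_prod (I : finType) (P : pred I) :
  ([forall l, P l])%:R = \prod_l (P l)%:R :> C.
Proof.
case: (boolP [forall l, P l]) => [/forallP H | /forallPn [l Hl]].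
  by rewrite big1 // => l _; rewrite H.
by rewrite (bigD1 l) //= (negbTE Hl) mul0r.
Qed.

Lemma unitffun (u v : {ffun 'I_r -> unit}) : u = v.
Proof. by apply/ffunP => p; case: (u p); case: (v p). Qed.

Lemma agree_bool (T : {set 'I_n}) (x y : J) :
  agree_off_groups T x y = [forall l, (l \notin T) ==> (grp x.1 l == grp y.1 l)].
Proof.
rewrite /agree_off_groups (unitffun x.2 y.2) eqxx andbT.
apply/forallP/forallP.
  move=> H l; apply/implyP => Hl; apply/eqP/ffunP => p; rewrite !ffunE.
  by apply/eqP; exact: (implyP (forallP (H p) l) Hl).
move=> H p; apply/forallP => i; apply/implyP => Hi.
by move: (implyP (H i) Hi) => /eqP/ffunP/(_ p); rewrite !ffunE => ->.
Qed.

Lemma agree_prod2 T (h : 'I_n -> qstr r -> qstr r -> C) (x y : J) :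
  (agree_off_groups T x y)%:R * \prod_(l in T) h l (grp x.1 l) (grp y.1 l) =
  \prod_l (if l \in T then h l (grp x.1 l) (grp y.1 l) else (grp x.1 l == grp y.1 l)%:R).
Proof.
rewrite agree_bool forall_prod [RHS](bigID (fun l => l \in T)) /= mulrC.
congr (_ * _); first by apply: eq_bigr => l ->.
rewrite [LHS](bigID (fun l => l \in T)) /= big1 ?mul1r.
  by apply: eq_bigr => l /negbTE ->.
by move=> l ->.
Qed.

Lemma expect_sum (T : finType) (I : finType) (P : pred I) (v : vect C T) (A : I -> oper C T) :
  expect v (fun x y => \sum_(i | P i) A i x y) = \sum_(i | P i) expect v (A i).
Proof.
rewrite /expect; under eq_bigr do under eq_bigr do rewrite mulr_sumr mulr_suml.
under eq_bigr do rewrite exchange_big /=.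
by rewrite exchange_big.
Qed.

Lemma expectZ (T : finType) (v : vect C T) c (A : oper C T) :
  expect v (fun x y => c * A x y) = c * expect v A.
Proof.
rewrite /expect mulr_sumr; apply: eq_bigr => x _; rewrite mulr_sumr.
by apply: eq_bigr => y _; ring.
Qed.

Lemma expect_ext (T : finType) (v : vect C T) (A B : oper C T) :
  (forall x y, A x y = B x y) -> expect v A = expect v B.
Proof.
move=> H; rewrite /expect; apply: eq_bigr => x _; apply: eq_bigr => y _; by rewrite H.
Qed.

Lemma sum_delta (T : finType) (F : T -> C) x : \sum_y (x == y)%:R * F y = F x.
Proof.
rewrite (bigD1 x) //= eqxx mul1r big1 ?addr0 // => y Hy.
by rewrite eq_sym (negbTE Hy) mul0r.
Qed.

Lemma prod_eq (z z' : qstr n) : \prod_l (z l == z' l)%:R = (z == z')%:R :> C.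
Proof.
rewrite -(forall_prod (fun l => z l == z' l)).
have -> : [forall l, z l == z' l] = (z == z'); last by [].
apply/forallP/eqP; last by move=> ->.
by move=> H; apply/ffunP => l; apply/eqP.
Qed.

Variable Enc : qstr r -> bool -> C.
Hypothesis HE : enc_isometry Enc.

Lemma q_id b b' : \sum_s \sum_t (Enc s b)^* * (s == t)%:R * Enc t b' = (b == b')%:R.
Proof.
rewrite -HE; apply: eq_bigr => s _.
under eq_bigr do rewrite -mulrA.
by rewrite -mulr_sumr sum_delta.
Qed.

Lemma q_proj b b' : \sum_s \sum_t (Enc s b)^* * codeproj Enc s t * Enc t b' = (b == b')%:R.
Proof.
rewrite /codeproj.
transitivity (\sum_s \sum_t \sum_c (Enc s b)^* * Enc s c * ((Enc t c)^* * Enc t b')).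
  apply: eq_bigr => s _; apply: eq_bigr => t _.
  rewrite mulr_sumr mulr_suml; apply: eq_bigr => c _; ring.
under eq_bigr do rewrite exchange_big /=.
rewrite exchange_big /=.
under eq_bigr do under eq_bigr do rewrite -mulr_sumr HE.
under eq_bigr do rewrite -mulr_suml HE.
by rewrite !big_bool /=; case: b; case: b' => /=; rewrite ?mulr1 ?mulr0 ?addr0 ?add0r.
Qed.
End Aux3.

Section Aux4.
Variables (C : numClosedFieldType) (r : nat).
Variable Enc : qstr r -> bool -> C.
Variable G : bool -> bool -> oper C (qstr r).
Hypothesis HC : corrects_single_paulis Enc G.
Variable q : 'I_r.

Lemma sq_id (s : qstr r) c : \sum_u single_qubit_op q (pauliI C) s u * Enc u c = Enc s c.
Proof.
rewrite -[RHS](sum_delta (fun u => Enc u c) s); apply: eq_bigr => u _.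
rewrite /single_qubit_op /pauliI -natrM mulnb.
suff -> : (s q == u q) && agree_off q s u = (s == u) by [].
apply/idP/idP => [/andP[/eqP Hq /forallP H]|/eqP ->].
  apply/eqP/ffunP => j; case: (eqVneq j q) => [->|Hj] //.
  exact: (eqP (implyP (H j) Hj)).
rewrite eqxx /=; apply/forallP => j; exact/implyP.
Qed.

Lemma q_G b b' c c' :
  \sum_s \sum_t (Enc s c)^* * G b b' s t * Enc t c' = ((b == c) && (b' == c'))%:R.
Proof.
move: (HC q (or_introl (erefl (pauliI C))) b b' c c') => /=.
by under eq_bigr do under eq_bigr do rewrite !sq_id.
Qed.
End Aux4.

Section Psi.
Variables (C : numClosedFieldType) (n r : nat).
Local Notation labT := {ffun 'I_r * 'I_n -> bool}.
Local Notation J := (joint n r unit).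
Variable Enc : qstr r -> bool -> C.
Hypothesis HE : enc_isometry Enc.
Variable Gamma : vect C (qstr n).
Local Notation psi := (psiG Enc Gamma).

Lemma Jeq (x y : J) : \prod_l (grp x.1 l == grp y.1 l)%:R = (x == y)%:R :> C.
Proof.
rewrite -(@forall_prod C _ (fun l => grp x.1 l == grp y.1 l)).
suff -> : [forall l, grp x.1 l == grp y.1 l] = (x == y) by [].
apply/forallP/eqP => [H | -> //].
case: x y H => [x1 x2] [y1 y2] H /=; rewrite (unitffun x2 y2); congr pair.
rewrite -(untr_trf x1) -(untr_trf y1); congr untr; apply/ffunP => l; rewrite !ffunE.
exact: (eqP (H l)).
Qed.

Lemma final_step :
  \sum_z \sum_z' (Gamma z)^* * Gamma z' * \prod_l (z l == z' l)%:R = dotp Gamma Gamma.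
Proof.
rewrite /dotp; apply: eq_bigr => z _.
under eq_bigr do rewrite prod_eq.
rewrite -[RHS](sum_delta (fun z' => (Gamma z)^* * Gamma z')); apply: eq_bigr => z' _; ring.
Qed.

Lemma psi_norm : dotp psi psi = dotp Gamma Gamma.
Proof.
transitivity (expect psi (fun x y => \prod_l (grp x.1 l == grp y.1 l)%:R)).
  rewrite /dotp /expect; apply: eq_bigr => x _.
  under eq_bigr do rewrite Jeq.
  rewrite -[LHS](sum_delta (fun y => (psi x)^* * psi y)); apply: eq_bigr => y _; ring.
rewrite (expect_prod Enc Gamma (fun l (s t : qstr r) => (s == t)%:R)) -final_step.
apply: eq_bigr => z _; apply: eq_bigr => z' _.
by congr (_ * _); apply: eq_bigr => l _; rewrite q_id.
Qed.

Lemma psi_acc i : expect psi (acc2 Enc (W := unit) i) = dotp Gamma Gamma.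
Proof.
transitivity (expect psi (fun x y => \prod_l
   (if l \in [set i] then codeproj Enc (grp x.1 l) (grp y.1 l) else (grp x.1 l == grp y.1 l)%:R))).
  apply: expect_ext => x y.
  rewrite -(agree_prod2 [set i] (fun l s t => codeproj Enc s t)) big_set1 //.
rewrite (expect_prod Enc Gamma (fun l s t =>
   (if l \in [set i] then codeproj Enc s t else (s == t)%:R))) -final_step.
apply: eq_bigr => z _; apply: eq_bigr => z' _.
congr (_ * _); apply: eq_bigr => l _; case: (l \in [set i]).
  by rewrite q_proj.
by rewrite q_id.
Qed.
End Psi.

Section Bools.
Variables (n : nat) (S : {set 'I_n}).

Lemma b1 (w z : qstr n) :
  (restr S w == w) && [forall l, (l \in S) ==> (w l == z l)] = (w == restr S z).
Proof.
apply/idP/idP.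
  move/andP => [/eqP Hw /forallP H]; apply/eqP/ffunP => l; rewrite ffunE.
  case: (boolP (l \in S)) => Hl /=; first exact: (eqP (implyP (H l) Hl)).
  by rewrite -Hw ffunE (negbTE Hl).
move/eqP => ->; apply/andP; split.
  by apply/eqP/ffunP => l; rewrite !ffunE; case: (l \in S).
by apply/forallP => l; apply/implyP => Hl; rewrite !ffunE Hl.
Qed.

Lemma b2 (z z' : qstr n) :
  [forall l, (l \notin S) ==> (z l == z' l)] = (restr (~:S) z == restr (~:S) z').
Proof.
apply/forallP/eqP => [H|H].
  apply/ffunP => l; rewrite !ffunE in_setC; case: (boolP (l \in S)) => Hl //=.
  exact: (eqP (implyP (H l) Hl)).
move=> l; apply/implyP => Hl; move/ffunP/(_ l): H; rewrite !ffunE in_setC Hl /= => ->.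
by [].
Qed.

Lemma b3 (a b d : 'I_n -> bool) :
  [forall l, if l \in S then a l && b l else d l] =
  [&& [forall l, (l \in S) ==> a l], [forall l, (l \in S) ==> b l] &
      [forall l, (l \notin S) ==> d l]].
Proof.
apply/idP/idP.
  move/forallP => H; apply/and3P; split; apply/forallP => l; apply/implyP => Hl;
    move: (H l); rewrite ?Hl ?(negbTE Hl) //; by case/andP.
case/and3P => /forallP H1 /forallP H2 /forallP H3; apply/forallP => l.
case: (boolP (l \in S)) => Hl.
  by rewrite (implyP (H1 l) Hl) (implyP (H2 l) Hl).
exact: (implyP (H3 l) Hl).
Qed.

Lemma restrSS (z : qstr n) : restr S (restr S z) = restr S z.
Proof. by apply/ffunP => l; rewrite !ffunE; case: (l \in S). Qed.

Lemma restrCS (z z' : qstr n) : restr (~:S) (restr S z) = restr (~:S) (restr S z').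
Proof. by apply/ffunP => l; rewrite !ffunE in_setC; case: (l \in S). Qed.
End Bools.

Lemma bool5 (a b c d e : bool) : (a && b) && [&& c, d & e] = (a && c) && ((b && d) && e).
Proof. by case: a; case: b; case: c; case: d; case: e. Qed.

Lemma sum_delta' (C : numClosedFieldType) (T : finType) (F : T -> C) x :
  \sum_y (y == x)%:R * F y = F x.
Proof. rewrite -(sum_delta F x); apply: eq_bigr => y _; by rewrite eq_sym. Qed.

Section Rej.
Variables (C : numClosedFieldType) (n r : nat).
Variables (S0 : {set 'I_n}) (H0 : oper C (qstr n)).
Hypothesis Hact : acts_on S0 H0.

Lemma key (z z' : qstr n) :
  \sum_w \sum_w' ((restr S0 w == w) && (restr S0 w' == w'))%:R * H0 w w' *
    \prod_l (if l \in S0 then ((w l == z l) && (w' l == z' l))%:R else (z l == z' l)%:R)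
  = H0 z z'.
Proof.
have E : forall w w' : qstr n,
  \prod_l (if l \in S0 then ((w l == z l) && (w' l == z' l))%:R else (z l == z' l)%:R)
  = ([forall l, if l \in S0 then (w l == z l) && (w' l == z' l) else z l == z' l])%:R :> C.
  by move=> w w'; rewrite forall_prod; apply: eq_bigr => l _; case: (l \in S0).
under eq_bigr do under eq_bigr do rewrite E b3 b2 mulrAC -natrM mulnb bool5 !b1.
transitivity (\sum_w (w == restr S0 z)%:R * \sum_w' (w' == restr S0 z')%:R *
   ((restr (~:S0) z == restr (~:S0) z')%:R * H0 w w')).
  apply: eq_bigr => w _; rewrite mulr_sumr; apply: eq_bigr => w' _.
  by rewrite -!mulnb !natrM; ring.
rewrite (sum_delta' (fun w => \sum_w' (w' == restr S0 z')%:R *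
   ((restr (~:S0) z == restr (~:S0) z')%:R * H0 w w'))).
rewrite (sum_delta' (fun w' => 
   ((restr (~:S0) z == restr (~:S0) z')%:R * H0 (restr S0 z) w'))).
case: Hact => h Hh; rewrite !Hh restrSS restrSS (restrCS _ z z') eqxx mulr1.
by rewrite mulrC.
Qed.
End Rej.

Section RejPsi.
Variables (C : numClosedFieldType) (n m r : nat).
Variable Enc : qstr r -> bool -> C.
Variable G : bool -> bool -> oper C (qstr r).
Variables (Hs : 'I_m -> oper C (qstr n)) (S : 'I_m -> {set 'I_n}).
Hypothesis HE : enc_isometry Enc.
Hypothesis HC : corrects_single_paulis Enc G.
Variable q : 'I_r.
Variable Gamma : vect C (qstr n).
Local Notation psi := (psiG Enc Gamma).

Lemma psi_rej j : acts_on (S j) (Hs j) ->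
  expect psi (rej1 Hs S G (W := unit) j) = expect Gamma (Hs j).
Proof.
move=> Hact.
pose c (w w' : qstr n) := ((restr (S j) w == w) && (restr (S j) w' == w'))%:R * Hs j w w'.
pose D (w w' : qstr n) l (s t : qstr r) :=
  if l \in S j then G (w l) (w' l) s t else (s == t)%:R.
transitivity (expect psi (fun x y => \sum_w \sum_w' c w w' *
   \prod_l D w w' l (grp x.1 l) (grp y.1 l))).
  apply: expect_ext => x y; rewrite /rej1 big_mkcond mulr_sumr; apply: eq_bigr => w _.
  case: (boolP (restr (S j) w == w)) => Hw; last first.
    by rewrite mulr0 big1 // => w' _; rewrite /c (negbTE Hw) /= mul0r mul0r.
  rewrite big_mkcond mulr_sumr; apply: eq_bigr => w' _.
  case: (boolP (restr (S j) w' == w')) => Hw'; last first.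
    by rewrite mulr0 /c (negbTE Hw') andbF /= mul0r mul0r.
  rewrite /c Hw Hw' /= mul1r mulrCA; congr (_ * _).
  exact: (agree_prod2 (S j) (fun l s t => G (w l) (w' l) s t)).
rewrite expect_sum; under eq_bigr do rewrite expect_sum.
under eq_bigr do under eq_bigr do rewrite expectZ (expect_prod Enc Gamma (D _ _)).
transitivity (\sum_w \sum_w' \sum_z \sum_z' c w w' * ((Gamma z)^* * Gamma z' *
   \prod_l (if l \in S j then ((w l == z l) && (w' l == z' l))%:R else (z l == z' l)%:R))).
  apply: eq_bigr => w _; apply: eq_bigr => w' _; rewrite mulr_sumr; apply: eq_bigr => z _.
  rewrite mulr_sumr; apply: eq_bigr => z' _; congr (_ * (_ * _)).
  apply: eq_bigr => l _; rewrite /D; case: (l \in S j).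
    exact: q_G.
  exact: q_id.
rewrite swap4 /expect; apply: eq_bigr => z _; apply: eq_bigr => z' _.
rewrite -(key Hact z z') mulr_sumr mulr_suml; apply: eq_bigr => w _.
rewrite mulr_sumr mulr_suml; apply: eq_bigr => w' _.
rewrite /c; ring.
Qed.
End RejPsi.
Local Close Scope ring_scope.
Lemma card_lt (n j : nat) : j <= n -> #|[set l : 'I_n | l < j]| = j.
Proof.
move=> Hj.
have -> : [set l : 'I_n | l < j] = (fun l : 'I_j => widen_ord Hj l) @: setT.
  apply/setP => l; rewrite inE; apply/idP/imsetP => [Hl | [l' _ ->]].
    by exists (Ordinal Hl) => //; apply: val_inj.
  by rewrite /= ltn_ord.
rewrite card_imset ?cardsT ?card_ord //.
by move=> a b /(congr1 val) /= H; apply: val_inj.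
Qed.

Lemma ksets_pos (n k : nat) (i : 'I_n) : 0 < k -> k <= n -> 0 < #|ksets k i|.
Proof.
move=> Hk Hkn; apply/card_gt0P.
case: (ltnP i k) => Hik.
  exists [set l : 'I_n | l < k]; rewrite inE inE Hik card_lt //= eqxx //.
exists (i |: [set l : 'I_n | l < k.-1]).
rewrite inE setU11 cardsU1 inE card_lt /=.
  have -> : (i < k.-1) = false by apply/negbTE; rewrite -leqNgt; apply: leq_trans Hik; exact: leq_pred.
  by rewrite add1n prednK.
by apply: leq_trans Hkn; exact: leq_pred.
Qed.

Local Open Scope ring_scope.
Lemma r_pos (C : numClosedFieldType) (r : nat) (Enc : qstr r -> bool -> C) :
  enc_isometry Enc -> (0 < r)%N.
Proof.
case: r Enc => // Enc HE; exfalso.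
pose s0 : qstr 0 := [ffun i => false].
have Hs : forall F : qstr 0 -> C, \sum_s F s = F s0.
  have Hs0 : forall s : qstr 0, s = s0 by move=> s; apply/ffunP => -[].
  move=> F; rewrite (big_pred1 s0) // => s /=.
  by rewrite [s]Hs0 eqxx.
move: (HE true true) (HE true false) (HE false false); rewrite !Hs /=.
move=> H1 H2 H3; move/eqP: H2; rewrite mulf_eq0 => /orP [/eqP H | /eqP H].
  by move: H1; rewrite H mul0r => /esym/eqP; rewrite oner_eq0.
by move: H3; rewrite H mulr0 => /esym/eqP; rewrite oner_eq0.
Qed.

Lemma idop_unitary (C : numClosedFieldType) (T : finType) : unitary (@idop C T).
Proof.
have E : forall x z : T, opmul (adj (@idop C T)) (@idop C T) x z = @idop C T x z.
  move=> x z; rewrite /opmul /adj /idop.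
  under eq_bigr do rewrite conjC_nat.
  by rewrite (sum_delta' (fun y => (y == z)%:R)).
have E2 : forall x z : T, opmul (@idop C T) (adj (@idop C T)) x z = @idop C T x z.
  move=> x z; rewrite /opmul /adj /idop.
  under eq_bigr do rewrite conjC_nat.
  by rewrite (sum_delta (fun y => (z == y)%:R)) eq_sym.
split.
  by do 2 (apply: functional_extensionality => ?); apply: E.
by do 2 (apply: functional_extensionality => ?); apply: E2.
Qed.

Lemma expect_vext (C : numClosedFieldType) (T : finType) (v w : vect C T) (A : oper C T) :
  (forall x, v x = w x) -> expect v A = expect w A.
Proof. by move=> H; rewrite /expect; apply: eq_bigr => x _; apply: eq_bigr => y _; rewrite !H. Qed.

Lemma post_id (C : numClosedFieldType) (n r : nat) (psi : vect C (joint n r unit)) Q x :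
  post_state (st := @Strategy C n r unit psi (fun _ _ => @idop C (qstr n * unit)%type)) Q x = psi x.
Proof.
rewrite /post_state /applyop /=.
rewrite -[RHS](sum_delta psi x); apply: eq_bigr => y _; congr (_ * _).
rewrite /tensU /idop -(@forall_prod C _ (fun p => (rowp x.1 p, x.2 p) == (rowp y.1 p, y.2 p))).
suff -> : [forall p, (rowp x.1 p, x.2 p) == (rowp y.1 p, y.2 p)] = (x == y) by [].
apply/forallP/eqP => [H | -> //].
case: x y H => [x1 x2] [y1 y2] H /=; rewrite (unitffun x2 y2); congr pair.
apply/ffunP => -[p l]; move: (H p) => /eqP [] /ffunP /(_ l); by rewrite !ffunE.
Qed.

Theorem mainTheorem4 (C : numClosedFieldType) (n k m r : nat)
  (Hs : 'I_m -> oper C (qstr n)) (S : 'I_m -> {set 'I_n})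
  (Enc : qstr r -> bool -> C) (G : bool -> bool -> oper C (qstr r)) (a : C) :
  (0 < m)%N -> (0 < k)%N -> (k <= n)%N ->
  klocal_instance k Hs S ->
  enc_isometry Enc -> dual_channel G -> corrects_single_paulis Enc G ->
  codewords_locally_mixed Enc ->
  0 <= a ->
  (exists Gamma : vect C (qstr n),
      unit_vec Gamma /\ expect Gamma (hamiltonian Hs) <= a * m%:R) ->
  exists st : strategy C n r,
    valid_strategy st /\ 1 - a / 2%:R <= accept_prob k Hs S Enc G st.
Proof.
move=> Hm Hk Hkn Hkl HE Hdual HC Hmix Ha [Gamma [HGu HGe]].
have Hr := r_pos HE.
pose q : 'I_r := Ordinal Hr.
pose st := @Strategy C n r unit (psiG Enc Gamma) (fun _ _ => @idop C (qstr n * unit)%type).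
have EV : forall Q (A : oper C (joint n r unit)),
    expect (post_state (st := st) Q) A = expect (psiG Enc Gamma) A.
  move=> Q A; apply: expect_vext => x; exact: post_id.
exists st.
split.
  split; first by rewrite /unit_vec /= (psi_norm HE).
  move=> p Q; exact: idop_unitary.
have Erej : forall j, expect (post_state (st := st) (fun _ => S j)) (rej1 Hs S G (W := unit) j)
   = expect Gamma (Hs j).
  move=> j; rewrite EV (psi_rej HE HC q) //.
  by case: (Hkl j).
have Eacc : forall Q i, expect (post_state (st := st) Q) (acc2 Enc (W := unit) i) = 1.
  by move=> Q i; rewrite EV (psi_acc HE).
rewrite /accept_prob.
under eq_bigr do rewrite Erej.
under [X in _ <= _ + 2^-1 * (X / _)]eq_bigr => i _ do under eq_bigr => T _ do rewrite Eacc.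
have Hr0 : r%:R != 0 :> C by rewrite pnatr_eq0 -lt0n.
have Hm0 : m%:R != 0 :> C by rewrite pnatr_eq0 -lt0n.
have Hn0 : n%:R != 0 :> C by rewrite pnatr_eq0 -lt0n; apply: leq_trans Hkn.
have H20 : 2%:R != 0 :> C by rewrite pnatr_eq0.
have inner : 2^-1 * ((\sum_(p0 < r) (1:C)) / r%:R) + 2^-1 * 1 = 1.
  by rewrite sumr_const card_ord divff //; field.
under [X in _ <= _ + 2^-1 * (X / _)]eq_bigr => i _ do under eq_bigr => T _ do rewrite inner.
under [X in _ <= _ + 2^-1 * (X / _)]eq_bigr => i _ do rewrite sumr_const divff ?pnatr_eq0 -?lt0n ?ksets_pos //.
rewrite sumr_const card_ord divff // sumrB sumr_const card_ord.
have -> : \sum_i expect Gamma (Hs i) = expect Gamma (hamiltonian Hs).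
  by rewrite -expect_sum.
set E := expect Gamma (hamiltonian Hs).
have HEa : E / m%:R <= a by rewrite ler_pdivrMr // ltr0n.
rewrite -subr_ge0.
have -> : 2^-1 * ((1 *+ m - E) / m%:R) + 2^-1 * 1 - (1 - a / 2%:R) = (a - E / m%:R) / 2%:R.
  by rewrite -[1 *+ m]/(m%:R); field.
by apply: divr_ge0; rewrite ?subr_ge0 // ler0n.
Qed.
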